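(* Let $O$ be a finite order with $n$ elements having a questionable representation of finite width $k\ge2$ and finite length $l$. Then the comparability digraph of $O$ (arc $x\to y$ iff $x<y$) has a clique-width expression using at most $k$ labels, whose syntax tree has depth at most $l\,(k(k-1)+\lceil\log_2(k-1)\rceil)+\lceil\log_2 n\rceil+(l-1)(k-1)$.
   Context: For an ordinal $j$, $\mathcal O_j=(O_k)_{k<j}$ is a sequence of orders; a word of length $\ell\le j$ is $(x_k)_{k<\ell}$ with $x_k\in\mathrm{Dom}(O_k)$. The question of words $X,Y$ is $(k,x_k,y_k)$ for the least $k<\min(\mathrm{len}X,\mathrm{len}Y)$ with $x_k\ne y_k$, if it exists. For $i<j$, $\mathrm{Next}(i,j,\mathcal O_j)$ is the partial order on words of length $\ell$, $i\le\ell<j$, with $X<Y$ iff their question exists and $x_k<y_k$ in $O_k$; otherwise incomparable. A questionable representation of an order $O$ is an injective $f$ into some $\mathrm{Next}(i,j,\mathcal O_j)$ with $f(x)<f(y)\iff x<y$ for all $x,y$; its length is $j$ and its width is the supremum of the cardinalities of the $\mathrm{Dom}(O_k)$. Clique-width expressions (vertex creation with a label, disjoint union, relabelling, and adding all arcs from one label class to another) are the standard notion for directed graphs. *)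

(* Defs.v *)
From mathcomp Require Import all_boot.
Set Implicit Arguments. Unset Strict Implicit. Unset Printing Implicit Defensive.

(* A sequence of orders O_0,...,O_{l-1}: order O_m has domain {0,...,dom m - 1}
   (domains up to renaming) and strict order relation r m. *)
Definition strict_order_on (D : pred nat) (r : rel nat) : Prop :=
  (forall a, D a -> ~~ r a a) /\
  (forall a b c, D a -> D b -> D c -> r a b -> r b c -> r a c).

Definition orders_seq (l : nat) (dom : nat -> nat) (r : nat -> rel nat) : Prop :=
  forall m, m < l -> strict_order_on (fun a => a < dom m) (r m).

Definition next_word (i j : nat) (dom : nat -> nat) (w : seq nat) : Prop :=
  i <= size w < j /\ forall m, m < size w -> nth 0 w m < dom m.

Definition next_lt (r : nat -> rel nat) (X Y : seq nat) : Prop :=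
  exists m, [/\ m < minn (size X) (size Y),
               (forall p, p < m -> nth 0 X p = nth 0 Y p),
               nth 0 X m != nth 0 Y m &
               r m (nth 0 X m) (nth 0 Y m)].

Definition questionable_rep (T : finType) (lt : rel T) (i l : nat)
  (dom : nat -> nat) (r : nat -> rel nat) (f : T -> seq nat) : Prop :=
  [/\ i < l, orders_seq l dom r,
      forall x, next_word i l dom (f x),
      injective f &
      forall x y, next_lt r (f x) (f y) <-> lt x y].

Definition rep_width (l : nat) (dom : nat -> nat) (k : nat) : Prop :=
  (forall m, m < l -> dom m <= k) /\ (exists2 m, m < l & dom m = k).

(* Vertex creation carries the name of the created vertex (an element of T). *)
Inductive cwexp (T : Type) : Type :=
| CVert : T -> nat -> cwexp T
| CUnion : cwexp T -> cwexp T -> cwexp T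
| CRelab : nat -> nat -> cwexp T -> cwexp T
| CArcs : nat -> nat -> cwexp T -> cwexp T.

Section CW.
Variable T : eqType.

Fixpoint cw_verts (e : cwexp T) : seq T :=
  match e with
  | CVert v _ => [:: v]
  | CUnion e1 e2 => cw_verts e1 ++ cw_verts e2
  | CRelab _ _ e' => cw_verts e'
  | CArcs _ _ e' => cw_verts e'
  end.

Fixpoint cw_lab (e : cwexp T) : T -> nat :=
  match e with
  | CVert _ a => fun _ => a
  | CUnion e1 e2 => fun x => if x \in cw_verts e1 then cw_lab e1 x else cw_lab e2 x
  | CRelab a b e' => fun x => if cw_lab e' x == a then b else cw_lab e' x
  | CArcs _ _ e' => cw_lab e'
  end.

Fixpoint cw_arc (e : cwexp T) : rel T :=
  match e with
  | CVert _ _ => fun _ _ => false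
  | CUnion e1 e2 => fun x y => cw_arc e1 x y || cw_arc e2 x y
  | CRelab _ _ e' => cw_arc e'
  | CArcs a b e' => fun x y => cw_arc e' x y ||
      [&& x \in cw_verts e', y \in cw_verts e', cw_lab e' x == a & cw_lab e' y == b]
  end.

Fixpoint cw_wf (e : cwexp T) : bool :=
  match e with
  | CVert _ _ => true
  | CUnion e1 e2 => [&& cw_wf e1, cw_wf e2 & uniq (cw_verts e1 ++ cw_verts e2)]
  | CRelab _ _ e' => cw_wf e'
  | CArcs a b e' => (a != b) && cw_wf e'
  end.

Fixpoint cw_labels_below (k : nat) (e : cwexp T) : bool :=
  match e with
  | CVert _ a => a < k
  | CUnion e1 e2 => cw_labels_below k e1 && cw_labels_below k e2
  | CRelab a b e' => [&& a < k, b < k & cw_labels_below k e']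
  | CArcs a b e' => [&& a < k, b < k & cw_labels_below k e']
  end.

Fixpoint cw_depth (e : cwexp T) : nat :=
  match e with
  | CVert _ _ => 0
  | CUnion e1 e2 => (maxn (cw_depth e1) (cw_depth e2)).+1
  | CRelab _ _ e' => (cw_depth e').+1
  | CArcs _ _ e' => (cw_depth e').+1
  end.
End CW.

Definition cw_expr_of (T : finType) (lt : rel T) (k : nat) (e : cwexp T) : Prop :=
  [/\ cw_wf e, cw_labels_below k e, uniq (cw_verts e),
      (forall x : T, x \in cw_verts e) &
      (forall x y, cw_arc e x y = lt x y)].

(* Main.v *)
From HB Require Import structures.
Require Import Defs.
From mathcomp Require Import all_boot.
From mathcomp Require Import zify.
From Stdlib Require Import Lia.
Set Implicit Arguments. Unset Strict Implicit. Unset Printing Implicit Defensive.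

Section CWEq.
Variable T : eqType.

Fixpoint cweq (e1 e2 : cwexp T) : bool :=
  match e1, e2 with
  | CVert v a, CVert w b => (v == w) && (a == b)
  | CUnion a1 a2, CUnion b1 b2 => cweq a1 b1 && cweq a2 b2
  | CRelab a b e, CRelab a' b' e' => [&& a == a', b == b' & cweq e e']
  | CArcs a b e, CArcs a' b' e' => [&& a == a', b == b' & cweq e e']
  | _, _ => false
  end.

Lemma cweqP : Equality.axiom cweq.
Proof.
elim=> [v a|a1 IH1 a2 IH2|a b e IH|a b e IH] [w b'|b1 b2|a' b'' e'|a' b'' e'] /=;
  try by constructor.
- by apply: (iffP andP) => [[/eqP-> /eqP->]|[-> ->]].
- by apply: (iffP andP) => [[/IH1-> /IH2->]|[<- <-]]; split; [apply/IH1|apply/IH2].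
- by apply: (iffP and3P) => [[/eqP-> /eqP-> /IH->]|[-> -> <-]]; split=> //; apply/IH.
- by apply: (iffP and3P) => [[/eqP-> /eqP-> /IH->]|[-> -> <-]]; split=> //; apply/IH.
Qed.

HB.instance Definition _ := hasDecEq.Build (cwexp T) cweqP.
End CWEq.

Section Gen.
Variable T : eqType.
Implicit Types e : cwexp T.

Lemma verts_nonempty e : 0 < size (cw_verts e).
Proof. by elim: e => //= e1 IH1 e2 IH2; rewrite size_cat addn_gt0 IH1. Qed.

Definition UnionOf (U : cwexp T) (es : seq (cwexp T)) : Prop :=
  [/\ perm_eq (cw_verts U) (flatten (map (@cw_verts T) es)),
      (all (@cw_wf T) es -> uniq (flatten (map (@cw_verts T) es)) -> cw_wf U),
      (forall k, all (cw_labels_below k) es -> cw_labels_below k U),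
      (forall x y, cw_arc U x y = has (fun e => cw_arc e x y) es) &
      (forall x, x \in cw_verts U ->
          exists2 e, e \in es & (x \in cw_verts e) && (cw_lab U x == cw_lab e x))].

Lemma UnionOf1 e : UnionOf e [:: e].
Proof.
split=> //=; rewrite ?cats0 ?andbT //.
- by move=> k; rewrite andbT.
- by move=> x y; rewrite orbF.
- by move=> x xe; exists e; rewrite ?mem_head ?xe ?eqxx.
Qed.

Lemma UnionOf_cat U1 U2 es1 es2 : UnionOf U1 es1 -> UnionOf U2 es2 ->
  UnionOf (CUnion U1 U2) (es1 ++ es2).
Proof.
move=> [p1 w1 l1 a1 b1] [p2 w2 l2 a2 b2]; split=> /=.
- by rewrite map_cat flatten_cat perm_cat.
- rewrite all_cat map_cat flatten_cat => /andP[h1 h2] u.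
  move: (u); rewrite cat_uniq => /and3P[u1 _ u2].
  by rewrite w1 // w2 //= (perm_uniq (perm_cat p1 p2)).
- by move=> k; rewrite all_cat => /andP[/l1-> /l2->].
- by move=> x y; rewrite a1 a2 has_cat.
- move=> x xv; case: ifP => xv1.
    by have [e ee he] := b1 x xv1; exists e; rewrite // mem_cat ee.
  have xv2 : x \in cw_verts U2.
    by move: xv; rewrite mem_cat xv1.
  by have [e ee he] := b2 x xv2; exists e; rewrite // mem_cat ee orbT.
Qed.

Lemma UnionOf_perm U s es : UnionOf U s -> perm_eq s es -> UnionOf U es.
Proof.
move=> [p w l a b] pe; have pf := perm_flatten (perm_map (@cw_verts T) pe).
split.
- exact: perm_trans p pf.
- by rewrite -(perm_all _ pe) -(perm_uniq pf); exact: w.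
- by move=> k; rewrite -(perm_all _ pe); exact: l.
- by move=> x y; rewrite a (perm_has _ pe).
- by move=> x /b[e ee he]; exists e; rewrite // -(perm_mem pe).
Qed.

Definition wsum (es : seq (cwexp T)) := sumn [seq 2 ^ cw_depth e | e <- es].

End Gen.

Lemma greedy D : forall (ds : seq nat) acc, sorted geq ds -> all (fun d => d <= D) ds ->
  (forall d, d \in ds -> 2 ^ d %| acc) -> acc <= 2 ^ D ->
  acc + sumn (map (expn 2) ds) <= 2 ^ D.+1 ->
  exists j, acc + sumn (map (expn 2) (take j ds)) <= 2 ^ D /\
            sumn (map (expn 2) (drop j ds)) <= 2 ^ D.
Proof.
elim=> [|d ds IH] acc.
  by move=> *; exists 0; rewrite addn0.
move=> /= srt /andP[dD allD] dv accD tot.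
have [le|gt] := leqP (acc + 2 ^ d) (2 ^ D).
  have gtr : transitive geq by move=> a b c /= h1 h2; exact: leq_trans h2 h1.
  have allge := order_path_min gtr srt.
  have dv' : forall d', d' \in ds -> 2 ^ d' %| acc + 2 ^ d.
    move=> d' d'in; apply: dvdn_add; first by apply: dv; rewrite in_cons d'in orbT.
    by rewrite dvdn_exp2l //; move/allP: allge => /(_ d' d'in).
  have tot' : acc + 2 ^ d + sumn (map (expn 2) ds) <= 2 ^ D.+1 by rewrite -addnA.
  have [j [h1 h2]] := IH (acc + 2 ^ d) (path_sorted srt) allD dv' le tot'.
  by exists j.+1; rewrite /= addnA h1 h2.
exists 0 => /=; split; first by rewrite addn0.
have dvd_acc : 2 ^ d %| acc by apply: dv; rewrite mem_head.
have dvd_D : 2 ^ d %| 2 ^ D by rewrite dvdn_exp2l.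
have accE : acc = 2 ^ D.
  move: dvd_acc dvd_D => /dvdnP[a aE] /dvdnP[b bE].
  have q0 : 0 < 2 ^ d by rewrite expn_gt0.
  move: accD gt; rewrite aE bE -mulSnr leq_pmul2r // ltn_pmul2r // => ab ba.
  by congr (_ * _); apply/eqP; rewrite eqn_leq ab -ltnS.
move: tot; rewrite accE expnS mul2n -addnn leq_add2l.
by [].
Qed.

Lemma kraft (T : eqType) D : forall es : seq (cwexp T), es != [::] ->
  wsum es <= 2 ^ D -> exists2 U, UnionOf U es & cw_depth U <= D.
Proof.
elim: D => [|D IH] es.
  case: es => [|e [|e' es']] //= _.
    rewrite /wsum /= addn0 -[1](expn0 2) leq_exp2l // leqn0 => /eqP d0.
    by exists e; [exact: UnionOf1|rewrite d0].
  rewrite /wsum /=; case: (2 ^ cw_depth e) (expn_gt0 2 (cw_depth e)) => // n _.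
  by case: (2 ^ cw_depth e') (expn_gt0 2 (cw_depth e')) => // m _; rewrite addSn addnS.
move=> es0 wes.
case: es es0 wes => [//|e [|e2 es']] _ wes.
  exists e; first exact: UnionOf1.
  by move: wes; rewrite /wsum /= addn0 leq_exp2l.
set es := e :: e2 :: es' in wes *.
set s := sort (fun e1 e2 => cw_depth e2 <= cw_depth e1) es.
have ps : perm_eq s es by rewrite perm_sort perm_refl.
have ws : wsum s = wsum es by apply: perm_sumn; apply: perm_map.
have srt : sorted (fun e1 e2 => cw_depth e2 <= cw_depth e1) s.
  by apply: sort_sorted => a b; exact: leq_total.
set ds := map (@cw_depth T) s.
have wsd : wsum s = sumn (map (expn 2) ds) by rewrite /ds -map_comp.
have srtd : sorted geq ds by rewrite /ds sorted_map.
have sz : 1 < size s by rewrite (perm_size ps).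
have allD : all (fun d => d <= D) ds.
  have szd : 1 < size ds by rewrite size_map.
  move: srtd szd wes; rewrite -ws wsd; clearbody ds; clear wsd.
  case: ds => [|h [|h2 s']] // srtd _ wes; rewrite /= in wes.
  have gtr : transitive geq by move=> a b c /= h1 h2'; exact: leq_trans h2' h1.
  have := order_path_min gtr srtd => /= /andP[hh2 allh].
  have hD : h <= D.
    rewrite -ltnS -(ltn_exp2l _ _ (isT : 1 < 2)); apply: leq_trans wes.
    by rewrite -[X in X < _]addn0 ltn_add2l addn_gt0 expn_gt0.
  rewrite hD (leq_trans hh2 hD) /=.
  by apply/allP => d /(allP allh) dh; exact: leq_trans dh hD.
have [j [h1 h2]] : exists j, 0 + sumn (map (expn 2) (take j ds)) <= 2 ^ D /\
            sumn (map (expn 2) (drop j ds)) <= 2 ^ D.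
  apply: greedy => //; try (by move=> d _; exact: dvdn0).
  by rewrite add0n -wsd ws.
rewrite add0n /ds -map_take in h1; rewrite /ds -map_drop in h2.
have w1 : wsum (take j s) <= 2 ^ D by rewrite /wsum -map_comp in h1 *.
have w2 : wsum (drop j s) <= 2 ^ D by rewrite /wsum -map_comp in h2 *.
have sE := cat_take_drop j s.
have sne : s != [::] by case: (s) sz.
case E1: (take j s) => [|x1 s1].
  have wS : wsum s <= 2 ^ D by rewrite -sE E1.
  have [U uU dU] := IH s sne wS.
  by exists U; [exact: UnionOf_perm uU ps|exact: leqW].
case E2: (drop j s) => [|x2 s2].
  have wS : wsum s <= 2 ^ D by rewrite -sE E2 cats0.
  have [U uU dU] := IH s sne wS.
  by exists U; [exact: UnionOf_perm uU ps|exact: leqW].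
have n1 : take j s != [::] by rewrite E1.
have n2 : drop j s != [::] by rewrite E2.
have [U1 u1 d1] := IH (take j s) n1 w1.
have [U2 u2 d2] := IH (drop j s) n2 w2.
exists (CUnion U1 U2).
  by apply: (UnionOf_perm _ ps); rewrite -sE; exact: UnionOf_cat.
by rewrite /= ltnS geq_max d1 d2.
Qed.

Section Phases.
Variable T : eqType.
Implicit Types e : cwexp T.

Definition arcstep (R : rel nat) (ab : nat * nat) e :=
  if R ab.1 ab.2 then CArcs ab.1 ab.2 e
  else if R ab.2 ab.1 then CArcs ab.2 ab.1 e else e.
Definition arcs_phase R ps e := foldr (arcstep R) e ps.
Definition pairok (R : rel nat) (ab : nat * nat) (u w : nat) :=
  if R ab.1 ab.2 then (u == ab.1) && (w == ab.2)
  else if R ab.2 ab.1 then (u == ab.2) && (w == ab.1) else false.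

Lemma arcs_verts R ps e : cw_verts (arcs_phase R ps e) = cw_verts e.
Proof. by elim: ps => //= ab ps IH; rewrite /arcstep; do 2?case: ifP => //. Qed.

Lemma arcs_lab R ps e : cw_lab (arcs_phase R ps e) = cw_lab e.
Proof. by elim: ps => //= ab ps IH; rewrite /arcstep; do 2?case: ifP => //. Qed.

Lemma arcs_depth R ps e : cw_depth (arcs_phase R ps e) <= cw_depth e + size ps.
Proof.
elim: ps => [|ab ps IH] /=; first by rewrite addn0.
rewrite addnS /arcstep; case: ifP => _ /=; first by rewrite ltnS.
case: ifP => _ /=; first by rewrite ltnS.
exact: leqW.
Qed.

Lemma arcs_wf R ps e : all (fun ab => ab.1 != ab.2) ps -> cw_wf e ->
  cw_wf (arcs_phase R ps e).
Proof.
elim: ps => //= ab ps IH /andP[ne nps] we; rewrite /arcstep.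
by do 2?case: ifP => //= _; rewrite ?IH // ?andbT // eq_sym.
Qed.

Lemma arcs_lb k R ps e : all (fun ab => (ab.1 < k) && (ab.2 < k)) ps ->
  cw_labels_below k e -> cw_labels_below k (arcs_phase R ps e).
Proof.
elim: ps => //= ab ps IH /andP[/andP[h1 h2] nps] we; rewrite /arcstep.
by do 2?case: ifP => //= _; rewrite ?IH // h1 h2.
Qed.

Lemma arcs_arc R ps e x y : cw_arc (arcs_phase R ps e) x y =
  cw_arc e x y || [&& x \in cw_verts e, y \in cw_verts e &
                      has (fun ab => pairok R ab (cw_lab e x) (cw_lab e y)) ps].
Proof.
elim: ps => [|ab ps IH] /=; first by rewrite !andbF orbF.
rewrite /arcstep {1}/pairok; case: ifP => h1.
  rewrite /= arcs_verts arcs_lab IH.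
  by case: (cw_arc e x y) => //=; case: (x \in cw_verts e) => //=;
     case: (y \in cw_verts e) => //=; rewrite orbC.
case: ifP => h2 /=; rewrite ?arcs_verts ?arcs_lab IH //.
by case: (cw_arc e x y) => //=; case: (x \in cw_verts e) => //=;
     case: (y \in cw_verts e) => //=; rewrite orbC.
Qed.

Definition relab_phase (t : nat) (L : seq nat) e :=
  foldr (fun a e => CRelab a t e) e L.

Lemma relab_verts t L e : cw_verts (relab_phase t L e) = cw_verts e.
Proof. by elim: L. Qed.
Lemma relab_arc t L e : cw_arc (relab_phase t L e) = cw_arc e.
Proof. by elim: L. Qed.
Lemma relab_depth t L e : cw_depth (relab_phase t L e) = cw_depth e + size L.
Proof. by elim: L => [|a L IH] /=; rewrite ?addn0 ?IH ?addnS. Qed.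
Lemma relab_wf t L e : cw_wf (relab_phase t L e) = cw_wf e.
Proof. by elim: L. Qed.
Lemma relab_lb k t L e : t < k -> all (fun a => a < k) L ->
  cw_labels_below k e -> cw_labels_below k (relab_phase t L e).
Proof. by move=> tk; elim: L => //= a L IH /andP[-> /IH h] /h ->; rewrite tk. Qed.
Lemma relab_lab t L e x : cw_lab (relab_phase t L e) x =
  if cw_lab e x \in L then t else cw_lab e x.
Proof.
elim: L => [|a L IH] //=; rewrite IH in_cons.
case: (cw_lab e x \in L); rewrite ?orbT ?orbF; first by case: ifP.
by case: ifP.
Qed.
End Phases.

Fixpoint pairs k := if k is k'.+1 then pairs k' ++ [seq (a, k') | a <- iota 0 k'] else [::].

Lemma mem_pairs k a b : ((a, b) \in pairs k) = (a < b) && (b < k).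
Proof.
elim: k => [|k IH] /=; first by rewrite andbF.
rewrite mem_cat IH ltnS (leq_eqVlt b); apply/idP/idP.
  case/orP => [/andP[-> ->]|/mapP[c]]; rewrite ?orbT //.
  by rewrite mem_iota add0n => cb [-> ->]; rewrite eqxx andbT.
case/andP=> ab /orP[/eqP bk|bk]; last by rewrite ab bk.
by apply/orP; right; apply/mapP; exists a; rewrite ?mem_iota ?add0n -?bk.
Qed.

Lemma size_pairs k : (size (pairs k)).*2 = k * k.-1.
Proof.
elim: k => [|k IH] //=; rewrite size_cat size_map size_iota doubleD IH.
case: k {IH} => // k /=; rewrite -mul2n; lia.
Qed.

Lemma has_pairs (R : rel nat) k u w : u < k -> w < k -> (R u w -> ~~ R w u) ->
  has (fun ab => pairok R ab u w) (pairs k) = (u != w) && R u w.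
Proof.
move=> uk wk asym; apply/hasP/andP.
  case=> [[a b]]; rewrite mem_pairs /pairok /= => /andP[ab bk].
  case: ifP => [h /andP[/eqP-> /eqP->]|_]; first by rewrite h (ltn_eqF ab).
  case: ifP => // h /andP[/eqP-> /eqP->]; by rewrite h eq_sym (ltn_eqF ab).
case=> nuw ruw.
case: (ltngtP u w) nuw => // [uw|wu] _.
  by exists (u, w); rewrite ?mem_pairs ?uw // /pairok /= ruw !eqxx.
exists (w, u); rewrite ?mem_pairs ?wu // /pairok /=.
by rewrite (negbTE (asym ruw)) ruw !eqxx.
Qed.

Lemma mem_flat (T : eqType) (es : seq (cwexp T)) e x :
  e \in es -> x \in cw_verts e -> x \in flatten (map (@cw_verts T) es).
Proof. by move=> ee xe; apply/flattenP; exists (cw_verts e) => //; apply: map_f. Qed.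

Lemma flat_mem (T : eqType) (es : seq (cwexp T)) x :
  x \in flatten (map (@cw_verts T) es) -> exists2 e, e \in es & x \in cw_verts e.
Proof. by case/flattenP=> s /mapP[e ee ->] xs; exists e. Qed.

Lemma sum_le (A : eqType) (L : seq A) (w g : A -> nat) a :
  (forall e, e \in L -> w e <= a * g e) -> sumn (map w L) <= a * sumn (map g L).
Proof.
elim: L => [|e L IH] //= h; rewrite mulnDr leq_add ?h ?mem_head //.
by apply: IH => e' e'L; apply: h; rewrite in_cons e'L orbT.
Qed.

Lemma up_log2_le S : 0 < S -> 2 ^ up_log 2 S <= 2 * S.
Proof.
case: S => // [[|S]] _; first by rewrite up_log1.
have := up_log_gtn (isT : 1 < 2) (isT : 1 < S.+2).
have : 0 < up_log 2 S.+2 by rewrite up_log_gt0.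
case: (up_log 2 S.+2) => // u _ /=; rewrite expnS => h.
by rewrite leq_mul2l /= ltnW.
Qed.

Section Main.
Variables (T : finType) (lt : rel T) (k l i : nat) (dom : nat -> nat)
  (r : nat -> rel nat) (f : T -> seq nat).
Hypothesis lt_irr : irreflexive lt.
Hypothesis k_ge2 : 2 <= k.
Hypothesis hrep : questionable_rep lt i l dom r f.
Hypothesis hwidth : rep_width l dom k.

Let il : i < l. Proof. by case: hrep. Qed.
Let ord : orders_seq l dom r. Proof. by case: hrep. Qed.
Let wordP x : next_word i l dom (f x). Proof. by case: hrep => _ _ h _ _; exact: h. Qed.
Let finj : injective f. Proof. by case: hrep. Qed.
Let ltE x y : next_lt r (f x) (f y) <-> lt x y. Proof. by case: hrep => _ _ _ _ h; exact: h. Qed.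

Lemma wsz x : size (f x) < l.
Proof. by case: (wordP x) => /andP[]. Qed.
Lemma wlet x m : m < size (f x) -> nth 0 (f x) m < dom m.
Proof. by case: (wordP x) => _ h; exact: h. Qed.
Lemma domk m : m < l -> dom m <= k.
Proof. by case: hwidth => h _; exact: h. Qed.

Definition sub (p : seq nat) x := take (size p) (f x) == p.

Lemma sub_rcons p c x : sub (rcons p c) x =
  [&& sub p x, size p < size (f x) & nth 0 (f x) (size p) == c].
Proof.
rewrite /sub size_rcons.
case: (ltnP (size p) (size (f x))) => h.
  by rewrite (take_nth 0 h) eqseq_rcons.
rewrite andbF take_oversize ?(leq_trans h) //; apply/negbTE/eqP => e.
by move: h; rewrite e size_rcons ltnn.
Qed.

Lemma prefix_nlt x y : take (size (f x)) (f y) = f x -> ~~ lt x y.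
Proof.
move=> pre; apply/negP => /ltE[m [mlt agr ne _]].
move: ne; rewrite -{1}pre nth_take ?eqxx //.
by move: mlt; rewrite leq_min => /andP[].
Qed.

Lemma prefix_nlt' x y : take (size (f x)) (f y) = f x -> ~~ lt y x.
Proof.
move=> pre; apply/negP => /ltE[m [mlt agr ne _]].
move: ne; rewrite -pre nth_take ?eqxx //.
by move: mlt; rewrite leq_min => /andP[].
Qed.

Lemma lt_letter p x y : sub p x -> sub p y -> size p < size (f x) ->
  size p < size (f y) -> nth 0 (f x) (size p) != nth 0 (f y) (size p) ->
  lt x y = r (size p) (nth 0 (f x) (size p)) (nth 0 (f y) (size p)).
Proof.
move=> /eqP sx /eqP sy zx zy ne.
have agr q : q < size p -> nth 0 (f x) q = nth 0 (f y) q.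
  by move=> qp; rewrite -(nth_take 0 qp) sx -sy nth_take.
apply/idP/idP.
  move=> /ltE[m [mlt ag ne' rm]].
  have [mp|pm|<-] := ltngtP m (size p) => //.
    by move: ne'; rewrite agr ?eqxx.
  by move: ne; rewrite ag ?eqxx.
move=> rm; apply/ltE; exists (size p); split => //.
by rewrite leq_min zx zy.
Qed.

Lemma r_asym m a b : m < l -> a < dom m -> b < dom m -> r m a b -> ~~ r m b a.
Proof.
move=> ml ad bd rab; apply/negP => rba.
have [irr tr] := ord ml.
by move: (irr a ad); rewrite (tr a b a ad bd ad rab rba).
Qed.

Definition cc := size (pairs k) + k.

Definition Items p t h (es : seq (cwexp T)) :=
  [/\ all (fun e => cw_wf e && cw_labels_below k e) es &&
      uniq (flatten (map (@cw_verts T) es)),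
      (forall x, (x \in flatten (map (@cw_verts T) es)) = sub p x),
      (forall e x, e \in es -> x \in cw_verts e -> cw_lab e x = t),
      (forall x y, has (fun e => cw_arc e x y) es = [&& sub p x, sub p y & lt x y]) &
      (forall e, e \in es -> 2 ^ cw_depth e <= 2 ^ (cc * h) * size (cw_verts e))].

Definition inL p k' x := [&& sub p x, size p < size (f x) & nth 0 (f x) (size p) < k'].

Definition CI p h k' (L : seq (cwexp T)) :=
  [/\ all (fun e => cw_wf e && cw_labels_below k e) L &&
      uniq (flatten (map (@cw_verts T) L)),
      (forall x, (x \in flatten (map (@cw_verts T) L)) = inL p k' x),
      (forall e x, e \in L -> x \in cw_verts e -> cw_lab e x = nth 0 (f x) (size p)),
      (forall x y, has (fun e => cw_arc e x y) L =
          [&& inL p k' x, inL p k' y, nth 0 (f x) (size p) == nth 0 (f y) (size p) & lt x y]) &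
      (forall e, e \in L -> 2 ^ cw_depth e <= 2 ^ (cc * h) * size (cw_verts e))].


Lemma inLS p k' x : inL p k'.+1 x = inL p k' x || sub (rcons p k') x.
Proof.
rewrite /inL sub_rcons ltnS (leq_eqVlt (nth 0 (f x) (size p))).
by case: (sub p x); case: (size p < size (f x)); rewrite //= orbC.
Qed.

Lemma collect p h : (forall c, c < k -> exists es, Items (rcons p c) c h es) ->
  forall k', k' <= k -> exists L, CI p h k' L.
Proof.
move=> hc; elim=> [|k' IH] hk.
  exists [::]; split => //.
  - by move=> x; rewrite /inL ltn0 !andbF.
  - by move=> x y; rewrite /inL ltn0 !andbF.
have [L [hL1 hL2 hL3 hL4 hL5]] := IH (ltnW hk).
have [es [he1 he2 he3 he4 he5]] := hc k' hk.
exists (L ++ es); split.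
- move: hL1 he1 => /andP[a1 u1] /andP[a2 u2].
  rewrite all_cat a1 a2 map_cat flatten_cat cat_uniq u1 u2 /= andbT.
  apply/hasPn => x; rewrite he2 sub_rcons => /and3P[_ _ /eqP lx].
  by rewrite hL2 /inL lx ltnn !andbF.
- by move=> x; rewrite map_cat flatten_cat mem_cat hL2 he2 inLS.
- move=> e x; rewrite mem_cat => /orP[eL|ees] xe; first exact: hL3.
  rewrite (he3 e x ees xe).
  by have := mem_flat ees xe; rewrite he2 sub_rcons => /and3P[_ _ /eqP ->].
- move=> x y; rewrite has_cat hL4 he4 !inLS !sub_rcons.
  case: (lt x y); rewrite ?andbF //.
  rewrite /inL.
  move: (nth 0 (f x) (size p)) (nth 0 (f y) (size p)) => u w.
  set a1 := (size p < size (f x)); set a2 := (size p < size (f y)).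
  set b1 := sub p x; set b2 := sub p y.
  case: b1; case: b2; case: a1; case: a2 => //=; rewrite ?andbT;
    try by rewrite !andbF.
  case: (eqVneq u w) => [->|ne]; first by case: (w < k'); case: (w == k').
  rewrite !andbF /=.
  by case: eqP => // ex; case: eqP => // ey; move: ne; rewrite ex ey eqxx.
- by move=> e; rewrite mem_cat => /orP[]; [exact: hL5|exact: he5].
Qed.

Definition vpart p t : seq (cwexp T) :=
  if [pick x | f x == p] is Some v then [:: CVert v t] else [::].

Lemma vpart_props p t : t < k ->
  [/\ all (fun e => cw_wf e && cw_labels_below k e) (vpart p t) &&
      uniq (flatten (map (@cw_verts T) (vpart p t))),
      (forall x, (x \in flatten (map (@cw_verts T) (vpart p t))) = (f x == p)),
      (forall e x, e \in vpart p t -> x \in cw_verts e -> cw_lab e x = t),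
      (forall x y, has (fun e => cw_arc e x y) (vpart p t) = false) &
      (forall h e, e \in vpart p t -> 2 ^ cw_depth e <= 2 ^ (cc * h) * size (cw_verts e))].
Proof.
move=> tk; rewrite /vpart; case: pickP => [v /eqP fv|none]; split => //=.
- by rewrite tk.
- by move=> x; rewrite mem_seq1 -fv (inj_eq finj).
- by move=> e x; rewrite mem_seq1 => /eqP ->.
- by move=> h e; rewrite mem_seq1 => /eqP -> /=; rewrite muln1 expn_gt0.
Qed.

Lemma subE p x : sub p x = (f x == p) || inL p k x.
Proof.
rewrite /inL; case: (eqVneq (f x) p) => [<-|ne] /=.
  by rewrite /sub take_size eqxx.
case sx: (sub p x) => //=.
case: (ltnP (size p) (size (f x))) => zx /=.
  by apply/esym; apply: (leq_trans (wlet zx)); apply: domk; exact: ltn_trans zx (wsz x).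
by move: sx; rewrite /sub take_oversize // => /eqP fx; move: ne; rewrite fx eqxx.
Qed.

Lemma node_empty p h t : t < k -> CI p h k [::] -> forall h',
  exists es, Items p t h' es.
Proof.
move=> tk [_ c2 _ _ _] h'; exists (vpart p t).
have [v1 v2 v3 v4 v5] := vpart_props p tk.
have sE x : sub p x = (f x == p) by rewrite subE -c2 orbF.
split => //.
- by move=> x; rewrite v2 sE.
- move=> x y; rewrite v4 !sE; case: eqP => // fx; case: eqP => // fy.
  have xy : x = y by apply: finj; rewrite fx fy.
  by rewrite xy lt_irr.
- by move=> e; exact: v5.
Qed.

Lemma node p h t L : t < k -> CI p h k L -> exists es, Items p t h.+1 es.
Proof.
move=> tk hL; case: L hL => [|e0 L0] hL; first exact: node_empty hL h.+1.
set L := e0 :: L0 in hL *.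
have [c1 c2 c3 c4 c5] := hL.
move: c1 => /andP[c1 cu].
have c1w : all (@cw_wf T) L by apply/allP => e /(allP c1) /andP[].
have c1l : all (cw_labels_below k) L by apply/allP => e /(allP c1) /andP[].
set F := flatten (map (@cw_verts T) L).
set S := size F.
have S0 : 0 < S.
  by rewrite /S /F /= size_cat; apply: leq_trans (verts_nonempty e0) (leq_addr _ _).
have wL : wsum L <= 2 ^ (cc * h + up_log 2 S).
  apply: (@leq_trans (2 ^ (cc * h) * S)).
    rewrite /wsum /S /F size_flatten /shape -map_comp.
    exact: sum_le.
  by rewrite expnD leq_mul2l up_logP ?orbT.
have [U [pU wU lU aU bU] dU] := kraft (isT : L != [::]) wL.
set m := size p.
set G := relab_phase t (rem t (iota 0 k)) (arcs_phase (r m) (pairs k) U).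
have memU x : (x \in cw_verts U) = inL p k x by rewrite (perm_mem pU) c2.
have vG : cw_verts G = cw_verts U by rewrite relab_verts arcs_verts.
have labU x : x \in cw_verts U -> cw_lab U x = nth 0 (f x) m.
  by case/bU => e ee /andP[xe /eqP ->]; exact: c3.
have [v1 v2 v3 v4 v5] := vpart_props p tk.
exists (G :: vpart p t); split.
- move: v1 => /andP[va vu].
  rewrite /= va andbT cat_uniq vu andbT -andbA; apply/and4P; split.
  + rewrite relab_wf; apply: arcs_wf; last exact: wU.
    by apply/allP => [[a b]]; rewrite mem_pairs /= => /andP[ab _]; rewrite ltn_eqF.
  + apply: relab_lb => //.
      by apply/allP => a; rewrite (mem_rem_uniq _ (iota_uniq 0 k)) => /andP[_]; rewrite mem_iota.
    apply: arcs_lb; last exact: lU.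
    by apply/allP => [[a b]]; rewrite mem_pairs /= => /andP[ab bk]; rewrite bk (ltn_trans ab bk).
  + by rewrite vG (perm_uniq pU).
  + apply/hasPn => x; rewrite v2 vG memU /inL => /eqP ->; by rewrite ltnn andbF.
- by move=> x; rewrite /= mem_cat vG memU v2 subE orbC.
- move=> e x; rewrite in_cons => /orP[/eqP ->|]; last exact: v3.
  rewrite vG => xU; rewrite relab_lab arcs_lab labU //.
  have : nth 0 (f x) m < k by move: xU; rewrite memU /inL => /and3P[].
  rewrite (mem_rem_uniq _ (iota_uniq 0 k)) inE mem_iota /= => ->.
  by rewrite andbT; case: eqP.
- move=> x y; rewrite /= v4 orbF relab_arc arcs_arc aU c4.
  case ix: (inL p k x); last first.
    rewrite /= memU ix /=.
    case sx: (sub p x) => //=; case sy: (sub p y) => //=.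
    move: sx; rewrite subE ix orbF => /eqP fx.
    by apply/esym/negbTE/prefix_nlt; rewrite fx; apply/eqP.
  case iy: (inL p k y); last first.
    rewrite /= !memU iy /= !andbF.
    case sx: (sub p x) => //=; case sy: (sub p y) => //=.
    move: sy; rewrite subE iy orbF => /eqP fy.
    by apply/esym/negbTE/prefix_nlt'; rewrite fy; apply/eqP.
  have sx : sub p x by move: ix => /and3P[].
  have sy : sub p y by move: iy => /and3P[].
  rewrite sx sy !memU ix iy /= !labU ?memU //.
  move: (ix) (iy) => /and3P[_ zx lxk] /and3P[_ zy lyk].
  have ml : m < l by exact: ltn_trans zx (wsz x).
  rewrite has_pairs //; last by apply: r_asym => //; exact: wlet.
  case: eqP => [_|/eqP ne] /=; first by rewrite orbF.
  by rewrite (lt_letter sx sy zx zy ne).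
- move=> e; rewrite in_cons => /orP[/eqP ->|]; last exact: v5.
  rewrite vG (perm_size pU) -/S /G relab_depth size_rem ?mem_iota // size_iota.
  set X := cc * h + size (pairs k) + k.-1.
  apply: (@leq_trans (2 ^ (X + up_log 2 S))).
    rewrite leq_exp2l //; have := arcs_depth (r m) (pairs k) U.
    rewrite /X; lia.
  have -> : cc * h.+1 = X + 1 by rewrite /X mulnS /cc; lia.
  by rewrite (expnD 2 X) (expnD 2 X 1) -mulnA leq_mul2l expn1 up_log2_le ?orbT.
Qed.

Lemma claim h : forall p t, t < k -> l.-1 <= size p + h -> exists es, Items p t h es.
Proof.
elim: h => [|h IH] p t tk hp.
  apply: (@node_empty p 0 t tk _ 0); split => //.
  - move=> x; apply/esym/negbTE; rewrite /inL; apply/negP => /and3P[_ zx _].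
    by move: (wsz x) hp; rewrite addn0; lia.
  - move=> x y; rewrite /inL; apply/esym/negbTE; apply/negP => /and4P[/and3P[_ zx _] _ _ _].
    by move: (wsz x) hp; rewrite addn0; lia.
have hc c : c < k -> exists es, Items (rcons p c) c h es.
  by move=> ck; apply: IH => //; rewrite size_rcons; lia.
have [L hL] := collect hc (leqnn k).
exact: node tk hL.
Qed.

Lemma main (n_pos : 0 < #|T|) : exists e : cwexp T, cw_expr_of lt k e /\
  cw_depth e <= cc * l.-1 + up_log 2 #|T|.
Proof.
have k0 : 0 < k by lia.
have [es [e1 e2 e3 e4 e5]] := claim (p := [::]) k0 (leqnn _).
have s0 x : sub [::] x by rewrite /sub take0.
move: e1 => /andP[e1 eu].
set F := flatten (map (@cw_verts T) es) in eu e2.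
have nF : #|T| = size F.
  rewrite -(card_uniqP eu); apply: eq_card => x; rewrite e2 s0; by [].
have esn : es != [::].
  by apply/eqP => E; move: n_pos; rewrite nF /F E.
have wL : wsum es <= 2 ^ (cc * l.-1 + up_log 2 #|T|).
  apply: (@leq_trans (2 ^ (cc * l.-1) * size F)).
    rewrite /wsum /F size_flatten /shape -map_comp.
    exact: sum_le.
  by rewrite expnD leq_mul2l -nF up_logP ?orbT.
have [U [pU wU lU aU bU] dU] := kraft esn wL.
exists U; split => //; split.
- apply: wU => //; by apply/allP => e /(allP e1) /andP[].
- by apply: lU; apply/allP => e /(allP e1) /andP[].
- by rewrite (perm_uniq pU).
- by move=> x; rewrite (perm_mem pU) e2.
- by move=> x y; rewrite aU e4 !s0.
Qed.

End Main.

Unset Implicit Arguments.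
Theorem lemma7p4 (T : finType) (lt : rel T)
  (lt_irr : irreflexive lt) (lt_trans : transitive lt) (n_pos : 0 < #|T|)
  (k l i : nat) (dom : nat -> nat) (r : nat -> rel nat) (f : T -> seq nat)
  (k_ge2 : 2 <= k) (hrep : questionable_rep lt i l dom r f)
  (hwidth : rep_width l dom k) :
  exists e : cwexp T, cw_expr_of lt k e /\
    cw_depth e <= l * (k * (k - 1) + up_log 2 (k - 1)) + up_log 2 #|T|
                  + (l - 1) * (k - 1).
Proof.
have [e [he de]] := main lt_irr k_ge2 hrep hwidth n_pos.
exists e; split => //; apply: (leq_trans de).
have sp := size_pairs k.
rewrite /cc; move: (size (pairs k)) sp => P sp.
have K : (P + 1) * l.-1 <= (k * (k - 1)) * l.-1.
  by rewrite leq_mul2r; apply/orP; right; move: sp; rewrite -subn1; lia.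
move: K; rewrite -subn1; nia.
Qed.
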